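(* Let $\alpha>0$ and use Singleton-Only-SAFFRON with $M=e(1+\alpha)K\ln K$ right nodes (so $m=2e(1+\alpha)K\ln K\log_2 n\approx5.437(1+\alpha)K\ln K\log_2 n$ tests), where each item is connected to each right node independently with probability $1/K$. Then the decoder finds all $K$ defective items with probability $1-O(K^{-\alpha})$ (indeed the probability that some defective item is connected to no singleton right node is at most $K^{-\alpha}$), and the computational complexity of decoding is $O(K\log K\log n)$.
   Context: Items are indexed by $[n]$ with $n=2^L$; exactly $K$ items are defective, indicated by $x\in\{0,1\}^n$. $b_\ell\in\{0,1\}^L$ is the $L$-bit binary representation of $\ell-1$ and $\overline{v}$ is the bitwise complement. Singleton-Only-SAFFRON: item $\ell$ has signature $u_\ell=(b_\ell;\overline{b_\ell})\in\{0,1\}^{2L}$. A random bipartite graph has $n$ left nodes (items) and $M$ right nodes with incidence matrix $T$. For each right node $k$ there are $2L$ tests, the $r$-th pooling the items $\ell$ with $T_{k\ell}=1$ and $(u_\ell)_r=1$ (positive iff the pool contains a defective item); thus the measurement vector is $z_k=\bigvee_{\ell:T_{k\ell}x_\ell=1}u_\ell\in\{0,1\}^{2L}$. A right node is a singleton if it is connected to exactly one defective item. Decoder: for every right node $k$ whose measurement vector has Hamming weight exactly $L$, declare defective the item $\ell$ whose $b_\ell$ equals the first $L$ bits of $z_k$. Here $\ln$ is the natural logarithm and $e$ its base. *)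

(* Defs.v *)
(* Probabilities are
   computed as explicit finite sums over all bipartite graphs T. *)
From Stdlib Require Import Reals.
From HB Require Import structures.
From mathcomp Require Import all_boot.
Set Implicit Arguments.
Unset Strict Implicit.
Unset Printing Implicit Defensive.

HB.instance Definition _ :=
  Monoid.isComLaw.Build R R0 Rplus (fun a b c => esym (Rplus_assoc a b c)) Rplus_comm Rplus_0_l.
HB.instance Definition _ :=
  Monoid.isComLaw.Build R R1 Rmult (fun a b c => esym (Rmult_assoc a b c)) Rmult_comm Rmult_1_l.

(* Items are 'I_(2^L); item i (0-based) corresponds to item l = i+1 in the
   paper, so b_l is the L-bit binary representation of i.
   bit i r = r-th binary digit of i (little-endian; the bit order is
   immaterial as long as it is used consistently). *)
Definition bit (i : nat) (r : nat) : bool := odd (i %/ 2 ^ r).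

Definition bvec L (i : 'I_(2 ^ L)) (r : 'I_L) : bool := bit i r.

Definition signature L (i : 'I_(2 ^ L)) (r : 'I_(L + L)) : bool :=
  match split r with
  | inl j => bit i j
  | inr j => ~~ bit i j
  end.

Notation graph M L := {ffun 'I_M * 'I_(2 ^ L) -> bool}.
Notation defvec L := {ffun 'I_(2 ^ L) -> bool}.

Definition meas M L (x : defvec L) (T : graph M L) (k : 'I_M) (r : 'I_(L + L))
  : bool := [exists l, [&& T (k, l), x l & signature l r]].

Definition meas_weight M L (x : defvec L) (T : graph M L) (k : 'I_M) : nat :=
  #|[set r | meas x T k r]|.

Definition decoded M L (x : defvec L) (T : graph M L) : {set 'I_(2 ^ L)} :=
  [set l | [exists k, (meas_weight x T k == L) &&
                      [forall r : 'I_L, bvec l r == meas x T k (lshift L r)]]].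

Definition defectives L (x : defvec L) : {set 'I_(2 ^ L)} := [set l | x l].

Definition singleton M L (x : defvec L) (T : graph M L) (k : 'I_M) : bool :=
  #|[set l | T (k, l) && x l]| == 1%N.

Definition some_defective_unresolved M L (x : defvec L) (T : graph M L) : bool :=
  [exists l, x l && [forall k, ~~ (T (k, l) && singleton x T k)]].

Definition graph_weight M L (p : R) (T : graph M L) : R :=
  \big[Rmult/R1]_(e : 'I_M * 'I_(2 ^ L)) (if T e then p else (Rminus R1 p)).

Definition prob M L (p : R) (E : pred (graph M L)) : R :=
  \big[Rplus/R0]_(T : graph M L | E T) graph_weight p T.

(* Cost model of the decoder (number of elementary bit reads): for each right
   node, read its 2L measured bits to compute the Hamming weight, and if the
   weight is L, read the first L bits to form the declared index. *)
Definition decode_cost M L (x : defvec L) (T : graph M L) : nat :=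
  \sum_(k < M) ((L + L) + (if meas_weight x T k == L then L else 0))%N.

(* Main.v *)
Require Import Defs.
From Stdlib Require Import Reals Lra Lia.
From HB Require Import structures.
From mathcomp Require Import all_boot zify.
Set Implicit Arguments.
Unset Strict Implicit.
Unset Printing Implicit Defensive.
Local Open Scope R_scope.

HB.instance Definition _ := Monoid.isMulLaw.Build R R0 Rmult Rmult_0_l Rmult_0_r.
HB.instance Definition _ := Monoid.isAddLaw.Build R Rmult Rplus Rmult_plus_distr_r Rmult_plus_distr_l.

Lemma prod_ge0 (I : Type) (r : seq I) (P : pred I) (F : I -> R) :
  (forall i, P i -> 0 <= F i) -> 0 <= \big[Rmult/R1]_(i <- r | P i) F i.
Proof. move=> H; apply: big_ind => //; [lra| move=> a b Ha Hb; nra]. Qed.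

Lemma sum_le (I : Type) (r : seq I) (P : pred I) (F G : I -> R) :
  (forall i, P i -> F i <= G i) ->
  \big[Rplus/R0]_(i <- r | P i) F i <= \big[Rplus/R0]_(i <- r | P i) G i.
Proof. move=> H; apply: (big_ind2 (fun a b => a <= b)) => //; [lra | move=> *; lra]. Qed.

Lemma sum_ge0 (I : Type) (r : seq I) (P : pred I) (F : I -> R) :
  (forall i, P i -> 0 <= F i) -> 0 <= \big[Rplus/R0]_(i <- r | P i) F i.
Proof. move=> H; apply: big_ind => //; [lra| move=> a b Ha Hb; lra]. Qed.

Lemma prod_const (I : finType) (A : pred I) (c : R) :
  \big[Rmult/R1]_(i in A) c = c ^ #|A|.
Proof. rewrite big_const; elim: #|A| => //= n ->; done. Qed.

Lemma sum_const (I : finType) (A : pred I) (c : R) :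
  \big[Rplus/R0]_(i in A) c = INR #|A| * c.
Proof. rewrite big_const; elim: #|A| => [|n IH]; first by rewrite /=; ring. rewrite S_INR -/(iter n.+1 _ _) iterS IH; ring. Qed.

Lemma weight_ge0 M L p (T : graph M L) : 0 <= p <= 1 -> 0 <= graph_weight p T.
Proof. move=> Hp; apply: prod_ge0 => e _; case: (T e); lra. Qed.

Lemma prob_mono M L p (E1 E2 : pred (graph M L)) : 0 <= p <= 1 ->
  (forall T, E1 T -> E2 T) -> prob p E1 <= prob p E2.
Proof.
move=> Hp H; rewrite /prob (big_mkcond E1) (big_mkcond E2).
apply: sum_le => T _. case E: (E1 T); first by rewrite (H _ E); lra.
case: (E2 T); [apply: weight_ge0 | ]; lra.
Qed.

Lemma prod_constP (I : finType) (P : pred I) (c : R) :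
  \big[Rmult/R1]_(i | P i) c = c ^ #|P|.
Proof. by rewrite prod_const. Qed.

Lemma prod_constT (I : finType) (c : R) :
  \big[Rmult/R1]_(i : I) c = c ^ #|I|.
Proof. by rewrite prod_const. Qed.

Lemma sum_constP (I : finType) (P : pred I) (c : R) :
  \big[Rplus/R0]_(i | P i) c = INR #|P| * c.
Proof. by rewrite sum_const. Qed.

Definition wt (p : R) (b : bool) : R := if b then p else Rminus R1 p.

Definition unc M L (G : {ffun 'I_M -> {ffun 'I_(2^L) -> bool}}) : graph M L :=
  [ffun e => G e.1 e.2].
Definition cur M L (T : graph M L) : {ffun 'I_M -> {ffun 'I_(2^L) -> bool}} :=
  [ffun k => [ffun j => T (k, j)]].

Lemma unc_bij M L : bijective (@unc M L).
Proof.
exists (@cur M L).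
- by move=> G; apply/ffunP => k; apply/ffunP => j; rewrite !ffunE.
- by move=> T; apply/ffunP => [[k j]]; rewrite !ffunE.
Qed.

Definition Bl L (x : defvec L) (l : 'I_(2^L)) (r : {ffun 'I_(2^L) -> bool}) : bool :=
  r l && (#|[set j | r j && x j]| == 1%N).
Definition Ul M L (x : defvec L) l (T : graph M L) : bool :=
  [forall k, ~~ (T (k, l) && singleton x T k)].

Lemma if_forall_prod (I : finType) (P : pred I) (F : I -> R) :
  (if [forall i, P i] then \big[Rmult/R1]_i F i else R0) =
  \big[Rmult/R1]_i (if P i then F i else R0).
Proof.
case: ifP => [/forallP H | /negbT /forallPn [i0 Hi0]].
  by apply: eq_bigr => i _; rewrite H.
by rewrite (bigD1 i0) //= (negbTE Hi0) Rmult_0_l.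
Qed.

Lemma row_sum L p :
  \big[Rplus/R0]_(r : {ffun 'I_(2^L) -> bool}) \big[Rmult/R1]_j wt p (r j) = R1.
Proof.
rewrite -(bigA_distr_bigA (fun j b => wt p b)).
apply: big1 => j _; rewrite big_bool /wt /=; ring.
Qed.

Lemma Bl_iff L (x : defvec L) l r : x l ->
  Bl x l r = r l && [forall j, (x j && (j != l)) ==> ~~ r j].
Proof.
move=> xl; rewrite /Bl; case rl: (r l) => //=; apply/idP/idP.
- move/cards1P => [a Ha].
  have : l \in [set j | r j && x j] by rewrite inE rl xl.
  rewrite Ha inE => /eqP Hla; subst a.
  apply/forallP => j; apply/implyP => /andP [xj jl]; apply/negP => rj.
  have : j \in [set j | r j && x j] by rewrite inE rj xj.
  by rewrite Ha inE (negbTE jl).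
- move/forallP => H; apply/cards1P; exists l; apply/setP => j; rewrite !inE.
  case: (eqVneq j l) => [->|jl]; first by rewrite rl xl.
  case xj: (x j); last by rewrite andbF.
  by have := H j; rewrite xj jl /= => /negbTE ->.
Qed.

Definition hh L (x : defvec L) (l : 'I_(2^L)) p (j : 'I_(2^L)) (b : bool) : R :=
  if j == l then (if b then p else R0)
  else if x j then (if b then R0 else Rminus R1 p) else wt p b.

Lemma Bl_prod L (x : defvec L) l p r : x l ->
  (if Bl x l r then \big[Rmult/R1]_j wt p (r j) else R0) =
  \big[Rmult/R1]_j hh x l p j (r j).
Proof.
move=> xl; case: (boolP (Bl x l r)) => HB; rewrite Bl_iff // in HB.
- move/andP: HB => [rl /forallP H]; apply: eq_bigr => j _; rewrite /hh /wt.
  case: (eqVneq j l) => [->|jl]; first by rewrite rl.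
  case xj: (x j) => //.
  by have := H j; rewrite xj jl /= => /negbTE ->.
- case rl: (r l) HB => /= HB.
  + move/forallPn: HB => [j]; rewrite negb_imply negbK => /andP [/andP [xj jl] rj].
    by rewrite (bigD1 j) //= /hh (negbTE jl) xj rj Rmult_0_l.
  + by rewrite (bigD1 l) //= /hh eqxx rl Rmult_0_l.
Qed.

Lemma Q_val L (x : defvec L) l p : x l ->
  \big[Rplus/R0]_(r : {ffun 'I_(2^L) -> bool})
     (if Bl x l r then \big[Rmult/R1]_j wt p (r j) else R0) =
  p * (Rminus R1 p) ^ (#|defectives x| - 1).
Proof.
move=> xl.
rewrite (eq_bigr (fun r : {ffun _ -> bool} => \big[Rmult/R1]_j hh x l p j (r j))); last first.
  by move=> r _; apply: Bl_prod.
rewrite -(bigA_distr_bigA (hh x l p)).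
rewrite (bigD1 l) //= big_bool /= /hh eqxx.
rewrite (bigID x) /=.
rewrite [X in _ * (_ * X)]big1; last first.
  move=> j /andP [jl /negbTE xj]; rewrite big_bool /= (negbTE jl) xj /wt; ring.
rewrite (eq_bigr (fun _ => Rminus R1 p)); last first.
  by move=> j /andP [jl xj]; rewrite big_bool /= (negbTE jl) xj; ring.
rewrite prod_constP.
have -> : #|[pred j | (j != l) && x j]| = (#|defectives x| - 1)%N.
  rewrite /defectives (cardsD1 l) inE xl /= add1n subSS subn0.
  by apply: eq_card => j; rewrite !inE.
set t := (_ ^ _).
ring.
Qed.

Lemma prob_Ul M L p (x : defvec L) l : x l ->
  prob p (Ul x l : pred (graph M L)) =
  (Rminus R1 (p * (Rminus R1 p) ^ (#|defectives x| - 1))) ^ M.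
Proof.
move=> xl; rewrite /prob (reindex (@unc M L) (onW_bij _ (@unc_bij M L))) /=.
rewrite big_mkcond /=.
rewrite (eq_bigr (fun G : {ffun _ -> defvec L} => \big[Rmult/R1]_k
   (if ~~ Bl x l (G k) then \big[Rmult/R1]_j wt p (G k j) else R0))); last first.
  move=> G _.
  have -> : Ul x l (unc G) = [forall k, ~~ Bl x l (G k)].
    apply: eq_forallb => k; rewrite /singleton /Bl ffunE /=.
    congr (~~ (_ && (_ == _))); apply: eq_card => j; by rewrite !inE ffunE.
  have -> : graph_weight p (unc G) = \big[Rmult/R1]_k \big[Rmult/R1]_j wt p (G k j).
    by rewrite pair_bigA /=; apply: eq_bigr => [[k j]] _; rewrite ffunE.
  exact: if_forall_prod.
rewrite -(bigA_distr_bigA (fun (k : 'I_M) r =>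
   if ~~ Bl x l r then \big[Rmult/R1]_j wt p (r j) else R0)).
rewrite prod_constT card_ord.
congr (_ ^ _).
have Hsum := row_sum L p.
rewrite (eq_bigr (fun r : {ffun _ -> bool} =>
   (if ~~ Bl x l r then \big[Rmult/R1]_j wt p (r j) else R0) +
   (if Bl x l r then \big[Rmult/R1]_j wt p (r j) else R0))) in Hsum; last first.
  by move=> r _; case: (Bl x l r) => /=; ring.
rewrite big_split /= Q_val // in Hsum.
move: Hsum; set t := (_ ^ _); set S := \big[Rplus/R0]_i _ => Hsum.
lra.
Qed.

Lemma union_bound M L p (x : defvec L) : 0 <= p <= 1 ->
  prob p (fun T : graph M L => some_defective_unresolved x T) <=
  \big[Rplus/R0]_(l in defectives x) prob p (Ul x l : pred (graph M L)).
Proof.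
move=> Hp; rewrite /prob.
under eq_bigr do rewrite big_mkcond.
rewrite exchange_big /= big_mkcond /=.
apply: sum_le => T _.
have Hge : forall l, 0 <= (if Ul x l T then graph_weight p T else R0).
  by move=> l; case: (Ul x l T); [apply: weight_ge0 | lra].
case: ifP => [/existsP [l /andP [xl Hu]] | _]; last by apply: sum_ge0.
rewrite (bigD1 l) /=; last by rewrite inE.
have -> : Ul x l T = true by [].
set S := \big[Rplus/R0]_(i | _) _.
have : 0 <= S by apply: sum_ge0 => i _; apply: Hge.
lra.
Qed.


Lemma exp_le x y : x <= y -> exp x <= exp y.
Proof. intros [H|H]; [left; apply exp_increasing; auto | subst; lra]. Qed.

Lemma exp_pow_n (x : R) (n : nat) : exp x ^ n = exp (INR n * x).
Proof.
induction n as [|n IH]. simpl. rewrite Rmult_0_l exp_0; reflexivity.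
change (exp x ^ S n) with (exp x * exp x ^ n).
rewrite IH -exp_plus S_INR. f_equal; ring.
Qed.

Lemma pow_ge_expm1 (t : nat) : exp (Ropp 1) <= (1 - / (INR t + 1)) ^ t.
Proof.
destruct t as [|t].
- simpl. rewrite exp_Ropp. assert (1 <= exp 1) by (generalize (exp_ineq1_le 1); lra).
  simpl. apply (Rle_trans _ (/ 1)). apply Rinv_le_contravar; lra. rewrite Rinv_1; lra.
- set (u := INR (S t)).
  assert (Hu : 1 <= u) by (unfold u; rewrite S_INR; generalize (pos_INR t); lra).
  assert (H1 : exp (- / u) <= 1 - / (u + 1)).
  { rewrite exp_Ropp. generalize (exp_ineq1_le (/ u)); intro H.
    assert (E : 1 - / (u + 1) = / (1 + / u)) by (field; lra).
    rewrite E. apply Rinv_le_contravar; [|exact H].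
    assert (0 < / u) by (apply Rinv_0_lt_compat; lra). lra. }
  replace (exp (Ropp 1)) with (exp (- / u) ^ S t).
  + apply pow_incr. split; [left; apply exp_pos | exact H1].
  + rewrite exp_pow_n. fold u. f_equal. field. lra.
Qed.

Lemma analytic (alpha : R) (K M : nat) : 0 < alpha -> (0 < K)%nat ->
  exp 1 * (1 + alpha) * INR K * ln (INR K) <= INR M ->
  INR K * (1 - / INR K * (1 - / INR K) ^ (K - 1)) ^ M <= Rpower (INR K) (- alpha).
Proof.
intros Ha HK HM.
set (k := INR K).
assert (Hk : 1 <= k) by (unfold k; apply (le_INR 1); lia).
assert (Ek : k = INR (K - 1) + 1) by (unfold k; rewrite -S_INR; f_equal; lia).
set (q := / k * (1 - / k) ^ (K - 1)).
assert (Hpow : exp (Ropp 1) <= (1 - / k) ^ (K - 1)).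
{ rewrite Ek. apply pow_ge_expm1. }
assert (Hik : 0 < / k <= 1).
{ split. apply Rinv_0_lt_compat; lra. apply (Rle_trans _ (/ 1)). apply Rinv_le_contravar; lra. rewrite Rinv_1; lra. }
assert (Hpow1 : (1 - / k) ^ (K - 1) <= 1).
{ apply (Rle_trans _ (1 ^ (K - 1))). apply pow_incr; lra. rewrite pow1; lra. }
assert (Hq1 : q <= 1).
{ unfold q. assert (0 <= (1 - / k) ^ (K-1)) by (apply pow_le; lra). nra. }
assert (Hqlow : / (exp 1 * k) <= q).
{ unfold q. rewrite Rinv_mult -exp_Ropp. rewrite Rmult_comm.
  apply Rmult_le_compat_l; lra. }
assert (Hln : 0 <= ln k).
{ destruct Hk as [Hk|Hk]. left. rewrite -ln_1. apply ln_increasing; lra.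
  rewrite -Hk ln_1; lra. }
assert (HMpos : 0 <= INR M) by apply pos_INR.
assert (Hstep1 : (1 - q) ^ M <= exp (- q) ^ M).
{ apply pow_incr. split. lra. generalize (exp_ineq1_le (-q)); lra. }
rewrite exp_pow_n in Hstep1.
assert (Hstep2 : INR M * - q <= - ((1 + alpha) * ln k)).
{ assert (HH : (1 + alpha) * ln k <= / (exp 1 * k) * INR M).
  { assert (E : (1 + alpha) * ln k = / (exp 1 * k) * (exp 1 * (1 + alpha) * k * ln k)).
    { field. split. lra. generalize (exp_pos 1); lra. }
    rewrite E. apply Rmult_le_compat_l. left; apply Rinv_0_lt_compat.
    generalize (exp_pos 1); nra. exact HM. }
  assert (/ (exp 1 * k) * INR M <= q * INR M) by (apply Rmult_le_compat_r; lra).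
  lra. }
apply exp_le in Hstep2.
assert (Hfin : k * exp (- ((1 + alpha) * ln k)) = Rpower k (- alpha)).
{ unfold Rpower. rewrite -{1}(exp_ln k); last lra. rewrite -exp_plus. f_equal. ring. }
rewrite -Hfin. apply Rmult_le_compat_l. lra. lra.
Qed.


Lemma bit_inj L (i j : nat) : (i < 2^L)%N -> (j < 2^L)%N ->
  (forall r, (r < L)%N -> bit i r = bit j r) -> i = j.
Proof.
elim: L i j => [|L IH] i j.
  rewrite expn0 => Hi Hj _; lia.
move=> Hi Hj H.
have H0 : odd i = odd j by have := H 0%N isT; rewrite /bit expn0 !divn1.
have Hd : i %/ 2 = j %/ 2.
  apply: IH; rewrite ?ltn_divLR // -?expnSr //.
  move=> r Hr; have := H r.+1 Hr; by rewrite /bit expnS !divnMA.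
by rewrite (divn_eq i 2) (divn_eq j 2) !modn2 H0 Hd.
Qed.

Lemma sig_l L (l : 'I_(2^L)) (r : 'I_L) : signature l (lshift L r) = bit l r.
Proof. by rewrite /signature (unsplitK (inl r) : split (lshift L r) = inl r). Qed.

Lemma sig_r L (l : 'I_(2^L)) (r : 'I_L) : signature l (rshift L r) = ~~ bit l r.
Proof. by rewrite /signature (unsplitK (inr r) : split (rshift L r) = inr r). Qed.

Lemma weight_split M L (x : defvec L) (T : graph M L) k :
  meas_weight x T k =
  (\sum_(r < L) (meas x T k (lshift L r) + meas x T k (rshift L r)))%N.
Proof.
rewrite /meas_weight -sum1_card big_mkcond /= big_split_ord big_split /=.
by congr addn; apply: eq_bigr => r _; rewrite !inE; case: (meas _ _ _ _).
Qed.

Lemma sum_each_one (L : nat) (f : 'I_L -> nat) :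
  (forall r, 1 <= f r)%N -> (\sum_(r < L) f r = L)%N -> forall r, f r = 1%N.
Proof.
move=> H1 Hs r0; apply/eqP; rewrite eqn_leq H1 andbT leqNgt; apply/negP => Hr.
rewrite (bigD1 r0) //= in Hs.
move: Hs; set S := (\sum_(i < L | _) _)%N => Hs.
have : (\sum_(r < L | r != r0) 1 <= S)%N by apply: leq_sum.
rewrite sum1_card cardC1 card_ord.
have := ltn_ord r0. lia.
Qed.

Lemma decoded_eq M L (x : defvec L) (T : graph M L) :
  (exists l0, x l0) -> ~~ some_defective_unresolved x T -> decoded x T = defectives x.
Proof.
move=> [l0 Hl0] Hn; apply/setP => l'; rewrite !inE.
apply/idP/idP.
- case/existsP => k /andP [/eqP Hw /forallP Hb].
  case: (pickP (fun l => T (k, l) && x l)) => [l /andP [Tkl xl] | Hnone].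
  + have Ha r : (1 <= meas x T k (lshift L r) + meas x T k (rshift L r))%N.
      case B: (bit l r).
      * have -> : meas x T k (lshift L r) by apply/existsP; exists l; rewrite Tkl xl sig_l B.
        by [].
      * have -> : meas x T k (rshift L r) by apply/existsP; exists l; rewrite Tkl xl sig_r B.
        by rewrite addn1.
    have Hw' := Hw; rewrite weight_split in Hw'.
    have Hone := @sum_each_one _ _ Ha Hw'.
    have Heq r : meas x T k (lshift L r) = bit l r.
      have := Hone r; case B: (bit l r).
      * have -> : meas x T k (lshift L r) by apply/existsP; exists l; rewrite Tkl xl sig_l B.
        by [].
      * have -> : meas x T k (rshift L r) by apply/existsP; exists l; rewrite Tkl xl sig_r B.
        by case: (meas _ _ _ _).
    have -> : l' = l.
      apply: val_inj; apply: (@bit_inj L); [exact: ltn_ord | exact: ltn_ord | move=> r Hr].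
      by have := Hb (Ordinal Hr); rewrite /bvec /= Heq => /eqP.
    by [].
  + have Hm r : meas x T k r = false.
      apply/negbTE/negP => /existsP [l /and3P [Ht Hx _]].
      by have := Hnone l; rewrite /= Ht Hx.
    have E0 : [set r | meas x T k r] = set0 by apply/setP => r; rewrite !inE Hm.
    move: Hw; rewrite /meas_weight E0 cards0 => HL.
    have -> : l' = l0.
      have H2 : (2 ^ L = 1)%N by rewrite -HL expn0.
      have h1 : (val l' < 1)%N := leq_trans (ltn_ord l') (eq_leq H2).
      have h2 : (val l0 < 1)%N := leq_trans (ltn_ord l0) (eq_leq H2).
      by apply: val_inj; move: h1 h2; rewrite !ltnS !leqn0 => /eqP -> /eqP ->.
    by [].
- move=> xl'; apply/existsP.
  move: Hn; rewrite /some_defective_unresolved => /existsPn /(_ l').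
  rewrite xl' /= => /forallPn [k]; rewrite negbK => /andP [Tk Hs].
  move: Hs; rewrite /singleton => /cards1P [a Ha].
  have : l' \in [set l | T (k, l) && x l] by rewrite inE Tk xl'.
  rewrite Ha inE => /eqP Hla; subst a.
  have Hmeas r : meas x T k r = signature l' r.
    apply/existsP/idP => [[l /and3P [Tl xl s]] | s].
      have : l \in [set l | T (k, l) && x l] by rewrite inE Tl xl.
      by rewrite Ha inE => /eqP <-.
    by exists l'; rewrite Tk xl' s.
  exists k; apply/andP; split.
    rewrite weight_split.
    rewrite (eq_bigr (fun _ => 1%N)); first by rewrite sum1_card card_ord.
    by move=> r _; rewrite !Hmeas sig_l sig_r; case: (bit _ _).
  by apply/forallP => r; rewrite Hmeas sig_l.
Qed.


Theorem theorem3 (alpha : R) (halpha : (0 < alpha)) :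
  exists C : R,
  forall (K L M : nat) (x : defvec L),
    (0 < K)%nat ->
    #|defectives x| = K ->
    (* M = e (1 + alpha) K ln K, rounded up to an integer *)
    (exp 1 * (1 + alpha) * INR K * ln (INR K) <= INR M) ->
    (INR M < exp 1 * (1 + alpha) * INR K * ln (INR K) + 1) ->
    [/\ (prob (/ INR K) (fun T : graph M L => decoded x T != defectives x)
           <= Rpower (INR K) (- alpha)),
        (prob (/ INR K) (fun T : graph M L => some_defective_unresolved x T)
           <= Rpower (INR K) (- alpha))
      & (2 <= K)%nat -> forall T : graph M L,
          (INR (decode_cost x T) <= C * INR K * ln (INR K) * INR L)].
Proof.
exists (3 * (exp 1 * (1 + alpha) + / (2 * ln 2))).
move=> K L M x HK HD HM1 HM2.
have Hk1 : 1 <= INR K by apply: (le_INR 1); lia.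
have Hp : 0 <= / INR K <= 1.
  split; first by left; apply: Rinv_0_lt_compat; lra.
  apply: (Rle_trans _ (/ 1)); first by apply: Rinv_le_contravar; lra.
  rewrite Rinv_1; lra.
have Hunres : prob (/ INR K) (fun T : graph M L => some_defective_unresolved x T)
           <= Rpower (INR K) (- alpha).
  apply: Rle_trans (union_bound M x Hp) _.
  rewrite (eq_bigr (fun _ => (Rminus R1 (/ INR K * (Rminus R1 (/ INR K)) ^ (K - 1))) ^ M)); last first.
    by move=> l; rewrite inE => xl; rewrite prob_Ul // HD.
  rewrite sum_const HD.
  exact: analytic.
have Hex : exists l0, x l0.
  have : (0 < #|defectives x|)%N by rewrite HD.
  by case/card_gt0P => l0; rewrite inE => ?; exists l0.
split => //.
- apply: Rle_trans _ Hunres; apply: prob_mono => // T Hdec.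
  case Hu: (some_defective_unresolved x T) => //.
  by move: Hdec; rewrite decoded_eq ?Hu // eqxx.
- move=> HK2 T.
  have Hc : (decode_cost x T <= 3 * L * M)%N.
    rewrite /decode_cost.
    apply: (@leq_trans (\sum_(k < M) (3 * L))%N).
      by apply: leq_sum => k _; case: (_ == _); lia.
    by rewrite sum_nat_const card_ord; lia.
  have Hc' := le_INR _ _ (elimT leP Hc).
  rewrite !mult_INR in Hc'.
  have Hln2 : 0 < ln 2 by rewrite -ln_1; apply: ln_increasing; lra.
  have HK2' : 2 <= INR K by apply: (le_INR 2); lia.
  have HlnK : ln 2 <= ln (INR K).
    case: (Rle_lt_or_eq_dec _ _ HK2') => H; last by rewrite -H; lra.
    by left; apply: ln_increasing; lra.
  set A := INR K * ln (INR K).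
  have hA : 2 * ln 2 <= A.
    rewrite /A; have := Rmult_le_compat _ _ _ _ (ltac:(lra) : 0 <= 2) (ltac:(lra) : 0 <= ln 2) HK2' HlnK; lra.
  have h1 : 1 <= / (2 * ln 2) * A.
    have E : / (2 * ln 2) * (2 * ln 2) = 1 by field; lra.
    rewrite -E; apply: Rmult_le_compat_l => //; left; apply: Rinv_0_lt_compat; lra.
  have hM : INR M <= (exp 1 * (1 + alpha) + / (2 * ln 2)) * A.
    have E : exp 1 * (1 + alpha) * INR K * ln (INR K) = exp 1 * (1 + alpha) * A by rewrite /A; ring.
    rewrite E in HM2; lra.
  have HL : 0 <= INR L by apply: pos_INR.
  have E2 : 3 * (exp 1 * (1 + alpha) + / (2 * ln 2)) * INR K * ln (INR K) * INR L
          = (3 * INR L) * ((exp 1 * (1 + alpha) + / (2 * ln 2)) * A) by rewrite /A; ring.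
  rewrite E2.
  apply: Rle_trans Hc' _.
  have E3 : 3 * INR L * INR M = (3 * INR L) * INR M by ring.
  have E4 : INR 3 = 3 by rewrite /=; ring.
  rewrite E4; apply: Rmult_le_compat_l => //; lra.
Qed.
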